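(* Let $R$ be a ring, $M$ a left $R$-module and $N$ a submodule of $M$. (1) $N$ is a completely hollow submodule of $M$ if and only if $N$ is a local module. (2) $N$ is completely strongly hollow in $M$ if and only if $N$ is a local module and strongly hollow in $M$.
   Context: $N$ is a completely hollow submodule if for every family $(K_i)_{i\in I}$ of submodules of $N$ with $\sum_i K_i=N$ there is $i$ with $K_i=N$. $N$ is completely strongly hollow in $M$ if for every family $(K_i)_{i\in I}$ of submodules of $M$ with $N\subseteq\sum_iK_i$ there is $i$ with $N\subseteq K_i$. $N$ is strongly hollow in $M$ if for all submodules $K,L$ of $M$, $N\subseteq K+L$ implies $N\subseteq K$ or $N\subseteq L$. A module is hollow if whenever it equals $K+L$ for submodules $K,L$, then $K$ or $L$ is the whole module; a local module is a nonzero cyclic hollow module. *)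

(* Defs.v *)
From HB Require Import structures.
From mathcomp Require Import all_boot all_algebra.
Set Implicit Arguments. Unset Strict Implicit. Unset Printing Implicit Defensive.
Import GRing.Theory.
Local Open Scope ring_scope.

(* Left R-modules are MathComp's [lmodType R] over a (possibly noncommutative)
   ring [R : pzRingType]. Subsets of M are predicates [M -> Prop]. *)

Section ModDefs.
Variables (R : pzRingType) (M : lmodType R).

Definition subsetM (A B : M -> Prop) : Prop := forall x, A x -> B x.
Definition eqsetM (A B : M -> Prop) : Prop := forall x, A x <-> B x.

Definition submod (S : M -> Prop) : Prop :=
  [/\ S 0, (forall x y, S x -> S y -> S (x + y)) & (forall (a : R) x, S x -> S (a *: x))].

Definition sum2 (K L : M -> Prop) : M -> Prop :=
  fun x => exists y z, [/\ K y, L z & x = y + z].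

Definition sumfam (I : Type) (K : I -> M -> Prop) : M -> Prop :=
  fun x => exists (n : nat) (idx : 'I_n -> I) (v : 'I_n -> M),
      (forall j, K (idx j) (v j)) /\ x = \sum_(j < n) v j.

Definition cyclic_mod (N : M -> Prop) : Prop :=
  exists m : M, eqsetM N (fun x => exists r : R, x = r *: m).

Definition hollow (N : M -> Prop) : Prop :=
  forall K L : M -> Prop, submod K -> submod L -> subsetM K N -> subsetM L N ->
    eqsetM N (sum2 K L) -> eqsetM K N \/ eqsetM L N.

Definition local_mod (N : M -> Prop) : Prop :=
  (exists x, N x /\ x != 0) /\ cyclic_mod N /\ hollow N.

Definition completely_hollow (N : M -> Prop) : Prop :=
  forall (I : Type) (K : I -> M -> Prop),
    (forall i, submod (K i) /\ subsetM (K i) N) ->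
    eqsetM (sumfam K) N -> exists i, eqsetM (K i) N.

Definition completely_strongly_hollow (N : M -> Prop) : Prop :=
  forall (I : Type) (K : I -> M -> Prop),
    (forall i, submod (K i)) ->
    subsetM N (sumfam K) -> exists i, subsetM N (K i).

Definition strongly_hollow (N : M -> Prop) : Prop :=
  forall K L : M -> Prop, submod K -> submod L ->
    subsetM N (sum2 K L) -> subsetM N K \/ subsetM N L.

End ModDefs.

(* Main.v *)
Require Import Defs.
From mathcomp Require Import all_boot all_algebra.
From Stdlib Require Import Classical.
Set Implicit Arguments. Unset Strict Implicit. Unset Printing Implicit Defensive.
Import GRing.Theory.
Local Open Scope ring_scope.

Section Aux.
Variables (R : pzRingType) (M : lmodType R).

Definition cyc (m : M) : M -> Prop := fun x => exists r : R, x = r *: m.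

Lemma submod_cyc m : submod (cyc m).
Proof.
split; first by exists 0; rewrite scale0r.
- by move=> x y [r ->] [s ->]; exists (r + s); rewrite scalerDl.
- by move=> a x [r ->]; exists (a * r); rewrite scalerA.
Qed.

Lemma cyc_sub (N : M -> Prop) m : submod N -> N m -> subsetM (cyc m) N.
Proof. by case=> _ _ HS Nm x [r ->]; apply: HS. Qed.

Lemma cyc_sum2 (K : M -> Prop) y s : submod K -> K y ->
  subsetM (cyc (y + s)) (sum2 K (cyc s)).
Proof.
case=> _ _ HS Ky x [r ->]; exists (r *: y), (r *: s); split.
- exact: HS.
- by exists r.
- by rewrite scalerDr.
Qed.

Lemma sum_in (I : Type) (K : I -> M -> Prop) (N : M -> Prop) :
  submod N -> (forall i, subsetM (K i) N) -> subsetM (sumfam K) N.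
Proof.
case=> N0 ND _ HK x [n [idx [v [Hv ->]]]].
elim/big_ind: _ => //; by move=> j _; apply: (HK (idx j)).
Qed.

Lemma sum_single (I : Type) (K : I -> M -> Prop) i x : K i x -> sumfam K x.
Proof.
by move=> Kx; exists 1%N, (fun _ => i), (fun _ => x); split => //; rewrite big_ord1.
Qed.

Definition fam2 (K L : M -> Prop) : bool -> M -> Prop := fun b => if b then K else L.

Lemma sumfam_sum2 K L : submod K -> submod L ->
  eqsetM (sumfam (fam2 K L)) (sum2 K L).
Proof.
move=> [K0 KD KS] [L0 LD LS] x; split.
- move=> [n [idx [v [Hv ->]]]].
  elim/big_ind: _.
  + by exists 0, 0; split => //; rewrite addr0.
  + move=> a b [a1 [a2 [Ha1 Ha2 ->]]] [b1 [b2 [Hb1 Hb2 ->]]].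
    exists (a1 + b1), (a2 + b2); split; [exact: KD|exact: LD|].
    by rewrite addrACA.
  + move=> j _; have := Hv j; rewrite /fam2; case: (idx j) => H.
    * by exists (v j), 0; split => //; rewrite addr0.
    * by exists 0, (v j); split => //; rewrite add0r.
- move=> [y [z [Ky Lz ->]]].
  exists 2%N, (fun j => val j == 0%N), (fun j => if val j == 0%N then y else z).
  split.
  + by case=> [[|[|j]] Hj] //=.
  + by rewrite !big_ord_recl big_ord0 /= addr0.
Qed.

Lemma sumfam_empty (K : Empty_set -> M -> Prop) x : sumfam K x -> x = 0.
Proof.
move=> [[|n] [idx [v [Hv ->]]]]; first by rewrite big_ord0.
by case: (idx ord0).
Qed.

Lemma gen (I : Type) (K : I -> M -> Prop) (N : M -> Prop)
 (step : forall i y s, K i y -> sumfam K s -> subsetM N (cyc (y + s)) ->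
     subsetM N (K i) \/ subsetM N (cyc s)) :
 forall n (idx : 'I_n -> I) v, (forall j, K (idx j) (v j)) ->
   subsetM N (cyc (\sum_j v j)) ->
   (exists i, subsetM N (K i)) \/ (forall x, N x -> x = 0).
Proof.
elim => [|n IH] idx v Hv HN.
- by right => x /HN [r ->]; rewrite big_ord0 scaler0.
- move: HN; rewrite big_ord_recl => HN.
  have Hs : sumfam K (\sum_(j < n) v (lift ord0 j)).
    by exists n, (fun j => idx (lift ord0 j)), (fun j => v (lift ord0 j)).
  case: (step _ _ _ (Hv ord0) Hs HN) => [H|H]; first by left; exists (idx ord0).
  exact: (IH (fun j => idx (lift ord0 j)) (fun j => v (lift ord0 j)) (fun j => Hv _) H).
Qed.

Lemma nonzero_of (N : M -> Prop) : ~ (forall x, N x -> x = 0) ->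
  exists x, N x /\ x != 0.
Proof.
move=> H; apply: NNPP => H2; apply: H => x Nx.
by case: (eqVneq x 0) => // nz; exfalso; apply: H2; exists x.
Qed.

Definition ord0_elim (T : Type) (i : 'I_0) : T := False_rect T (ltac:(by case: i)).
End Aux.

Theorem lemma2p3 (R : pzRingType) (M : lmodType R) (N : M -> Prop) :
  submod N ->
  (completely_hollow N <-> local_mod N) /\
  (completely_strongly_hollow N <-> local_mod N /\ strongly_hollow N).
Proof.
move=> sN; have [N0 ND NS] := sN.
pose KS := fun (p : {x : M | N x}) => cyc (proj1_sig p).
have KSsub : forall p, subsetM (KS p) N by move=> [x Nx]; apply: cyc_sub.
have NKS : subsetM N (sumfam KS).
  by move=> x Nx; apply: (sum_single (i := exist _ x Nx)); exists 1; rewrite scale1r.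
split; split.
- move=> CH; split; [|split].
  + apply: nonzero_of => H0.
    case: (CH Empty_set (fun _ => N) (fun i => match i with end)) => [|[]].
    move=> x; split; first by move/sumfam_empty ->.
    by move/H0 => ->; exists 0%N, (@ord0_elim _), (fun _ => 0); rewrite big_ord0.
  + have [[x Nx] Hx] := CH _ KS (fun p => conj (submod_cyc _) (KSsub p))
      (fun x => conj (sum_in sN KSsub (x:=x)) (NKS x)).
    by exists x => y; split => /Hx.
  + move=> K L sK sL KN LN H.
    have [b Hb] := CH _ (fam2 K L) (fun b => if b as b0 return
        submod (fam2 K L b0) /\ subsetM (fam2 K L b0) N then conj sK KN else conj sL LN)
      (fun x => iff_trans (sumfam_sum2 sK sL x) (iff_sym (H x))).
    by case: b Hb => /= Hb; [left|right].
- move=> [[x0 [Nx0 x0nz]] [[m Hm] Hol]] I K HK HE.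
  have : sumfam K m by apply/HE/Hm; exists 1; rewrite scale1r.
  move=> [n [idx [v [Hv Em]]]].
  have step : forall i y s, K i y -> sumfam K s -> subsetM N (cyc (y + s)) ->
     subsetM N (K i) \/ subsetM N (cyc s).
    move=> i y s Ky Ss HN.
    have Ns : N s := sum_in sN (fun i => (HK i).2) Ss.
    have [sKi KiN] := HK i.
    case: (Hol (K i) (cyc s) sKi (submod_cyc s) KiN (cyc_sub sN Ns)).
    * move=> x; split; first by move/HN; apply: cyc_sum2.
      by move=> [a [b [Ka Cb ->]]]; apply: ND; [apply: KiN|apply: (cyc_sub sN Ns)].
    * by move=> H; left => x /H.
    * by move=> H; right => x /H.
  have HN : subsetM N (cyc (\sum_j v j)) by rewrite -Em => x /Hm.
  case: (gen step Hv HN).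
  + by move=> [i Hi]; exists i => x; split; [apply: (HK i).2|apply: Hi].
  + by move=> H; move: x0nz; rewrite (H _ Nx0) eqxx.
- move=> CSH; split; [split; [|split]|].
  + apply: nonzero_of => H0.
    case: (CSH Empty_set (fun _ => N) (fun i => match i with end)) => [|[]].
    by move=> x /H0 ->; exists 0%N, (@ord0_elim _), (fun _ => 0); rewrite big_ord0.
  + have [[x Nx] Hx] := CSH _ KS (fun p => submod_cyc _) NKS.
    by exists x => y; split => [/Hx|/(cyc_sub sN Nx)].
  + move=> K L sK sL KN LN H.
    have [b Hb] := CSH _ (fam2 K L) (fun b => if b as b0 return submod (fam2 K L b0)
        then sK else sL) (fun x Nx => proj2 (sumfam_sum2 sK sL x) (proj1 (H x) Nx)).
    by case: b Hb => /= Hb; [left|right] => x; split; [apply: KN|apply: Hb|apply: LN|apply: Hb].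
  + move=> K L sK sL H.
    have [b Hb] := CSH _ (fam2 K L) (fun b => if b as b0 return submod (fam2 K L b0)
        then sK else sL) (fun x Nx => proj2 (sumfam_sum2 sK sL x) (H x Nx)).
    by case: b Hb => /= Hb; [left|right].
- move=> [[[x0 [Nx0 x0nz]] [[m Hm] _]] SH] I K HK HE.
  have : sumfam K m by apply/HE/Hm; exists 1; rewrite scale1r.
  move=> [n [idx [v [Hv Em]]]].
  have step : forall i y s, K i y -> sumfam K s -> subsetM N (cyc (y + s)) ->
     subsetM N (K i) \/ subsetM N (cyc s).
    move=> i y s Ky Ss HN.
    apply: (SH (K i) (cyc s) (HK i) (submod_cyc s)).
    by move=> x /HN; apply: cyc_sum2.
  have HN : subsetM N (cyc (\sum_j v j)) by rewrite -Em => x /Hm.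
  case: (gen step Hv HN).
  + by move=> [i Hi]; exists i.
  + by move=> H; move: x0nz; rewrite (H _ Nx0) eqxx.
Qed.
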